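(* Assume (H1)–(H3), $\kappa>\tilde\kappa$, and fix $\tilde\xi$ as below. There is a constant $C>0$ (depending only on $f,h,\kappa,r_0,\tilde\xi$) such that for every $u\in\mathcal X(\mathbb R)$ with $|u|^2\le r_0^2+\tilde\xi$ on $\mathbb R$: $$|u'|^2+F(|u|^2)+\tfrac\kappa2\big((h(|u|^2))'\big)^2\ge C^{-1}\big(|u'|^2+(|u|^2-r_0^2)^2\big)\quad\text{a.e. on }\mathbb R;$$ moreover $\||u|^2-r_0^2\|_{H^1(\mathbb R)}^2\le CE_\kappa(u)$, and if $\mu=\inf_{\mathbb R}|u|>0$ then $|P(u)|\le C\mu^{-1}E_\kappa(u)$.
   Context: $r_0>0$, $f,h\in C^\infty([0,\infty);\mathbb R)$ (H1), $f(r_0^2)=0$, $F(\sigma)=\int_\sigma^{r_0^2}f(w)dw$. (H2): $1+2\kappa\sigma h'(\sigma)^2>0$ for $\sigma\in[0,r_0^2]$; (H3): $F>0$ on $[0,r_0^2)$, $F''(r_0^2)>0$. $\tilde\kappa=\sup_{\sigma\in(0,r_0^2]}(-1/(2\sigma h'(\sigma)^2))$. $\tilde\xi>0$ is fixed such that $F(\sigma)>0$ and $1+2\kappa\sigma h'(\sigma)^2>0$ for all $\sigma\in(r_0^2,r_0^2+\tilde\xi]$. $\mathcal X(\mathbb R)=\{v\in H^1_{loc}(\mathbb R;\mathbb C):v'\in L^2,|v|^2-r_0^2\in L^2\}$. $E_\kappa(v)=\int(|v'|^2+F(|v|^2)+\frac\kappa2|(h(|v|^2))'|^2)dx$. $P(v)=\int\mathrm{Re}(iv'\bar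 v)(1-r_0^2/|v|^2)dx$ for $\inf|v|>0$. *)

(* Defs.v *)
From HB Require Import structures.
From mathcomp Require Import all_boot all_order all_algebra.
From mathcomp Require Import all_classical all_reals all_analysis.
From mathcomp Require Import complex.
Set Implicit Arguments. Unset Strict Implicit. Unset Printing Implicit Defensive.
Import Order.TTheory GRing.Theory Num.Theory.
Import numFieldNormedType.Exports.
Local Open Scope classical_set_scope.
Local Open Scope ring_scope.

Section Defs.
Variable R : realType.
Local Notation mu := (@lebesgue_measure R).

Definition cabs (z : R[i]) : R := Normc.normc z.

(* In one dimension this
   is exactly "w in W^{1,1}_loc(R) with weak derivative dw" (w being taken as
   its continuous representative). *)
Definition wderiv (w dw : R -> R) : Prop :=
  forall a b : R, a <= b ->
    mu.-integrable `[a, b] (EFin \o dw) /\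
    w b - w a = Rintegral mu `[a, b] dw.

Definition cwderiv (u du : R -> R[i]) : Prop :=
  wderiv (fun x => complex.Re (u x)) (fun x => complex.Re (du x)) /\
  wderiv (fun x => complex.Im (u x)) (fun x => complex.Im (du x)).

Definition inX (r0 : R) (u du : R -> R[i]) : Prop :=
  cwderiv u du /\
  mu.-integrable setT (fun x => ((cabs (du x)) ^+ 2)%:E) /\
  mu.-integrable setT (fun x => (((cabs (u x)) ^+ 2 - r0 ^+ 2) ^+ 2)%:E).

Definition rdw (g : R -> R) (x l : R) : Prop :=
  ((fun y => (g y - g x) / (y - x)) @ within [set y | 0 <= y /\ y != x] (nbhs x))
    --> l.

(* g in C^oo([0,oo)) with successive derivatives D n (D 0 = g on [0,oo)) *)
Definition smooth0 (g : R -> R) (D : nat -> R -> R) : Prop :=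
  (forall x, 0 <= x -> D 0%N x = g x) /\
  (forall (n : nat) x, 0 <= x -> rdw (D n) x (D n.+1 x)).

Definition Fpot (f : R -> R) (r0 : R) (s : R) : R :=
  if s <= r0 ^+ 2 then Rintegral mu `[s, r0 ^+ 2] f
  else - Rintegral mu `[r0 ^+ 2, s] f.

(* kappa_tilde = sup_{s in (0, r0^2]} ( -1 / (2 s h'(s)^2) ), with the
   convention -1/0 = -oo, as an extended real *)
Definition ktilde (dh : R -> R) (r0 : R) : \bar R :=
  ereal_sup [set (if dh s == 0 then -oo%E else (- (2 * s * (dh s) ^+ 2)^-1)%:E)
            | s in [set s | 0 < s <= r0 ^+ 2]].

(* E_kappa(u), where dhu is the weak derivative of h(|u|^2) *)
Definition Ekappa (kappa : R) (f : R -> R) (r0 : R) (u du : R -> R[i])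
  (dhu : R -> R) : \bar R :=
  (\int[mu]_(x in setT)
     ((cabs (du x)) ^+ 2 + Fpot f r0 ((cabs (u x)) ^+ 2)
      + kappa / 2 * (dhu x) ^+ 2)%:E)%E.

Definition Pmom (r0 : R) (u du : R -> R[i]) : \bar R :=
  (\int[mu]_(x in setT)
     (complex.Re ('i%C * du x * (u x)^*%C)
      * (1 - r0 ^+ 2 / (cabs (u x)) ^+ 2))%:E)%E.

End Defs.

(* Main.v *)
Require Import Defs.
From HB Require Import structures.
From mathcomp Require Import all_boot all_order all_algebra.
From mathcomp Require Import all_classical all_reals all_analysis.
From mathcomp Require Import complex.
From mathcomp Require Import measurable_realfun.
From mathcomp Require Import ring lra.
Import Order.TTheory GRing.Theory Num.Theory.
Import numFieldNormedType.Exports.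
Local Open Scope classical_set_scope.
Local Open Scope ring_scope.
Section RA.
Context {R : realType}.
Implicit Types (g : R -> R) (x l : R).

Lemma rdwP g x l : rdw g x l -> forall e, 0 < e -> exists2 d, 0 < d &
  forall y, 0 <= y -> y != x -> `|y - x| < d -> `|(g y - g x)/(y - x) - l| < e.
Proof.
move/cvgrPdist_lt => H e e0; have := H e e0.
rewrite near_withinE => /nbhs_ballP[d /= d0 Hd]; exists d => // y y0 yx yd.
rewrite distrC; apply: (Hd y) => //=.
by rewrite /ball /= distrC.
Qed.

Lemma is_deriveP_eps g x l :
  (forall e, 0 < e -> exists2 d, 0 < d &
    forall y, y != x -> `|y - x| < d -> `|(g y - g x)/(y - x) - l| < e) ->
  is_derive x 1 g l.
Proof.
move=> H.
have K : h^-1 *: ((g \o shift x) (h *: 1) - g x) @[h --> 0^'] --> l.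
  apply/cvgrPdist_lt => e e0; have [d d0 Hd] := H e e0.
  rewrite near_withinE; apply/nbhs_ballP; exists d => // h /= hd hn0.
  have := Hd (h + x); rewrite addrK.
  move: hd; rewrite /ball /= sub0r normrN => hd.
  have hx : h + x != x by rewrite -subr_eq0 addrK.
  move=> /(_ hx hd); rewrite distrC /=.
  by rewrite [h%:A]mulr1 [_ *: _]mulrC.

by apply: DeriveDef; [apply/cvg_ex; exists l | apply/cvg_lim].
Qed.
End RA.
Section RA2.
Context {R : realType}.
Implicit Types (g : R -> R) (x l : R).

Lemma is_derive_eps g x l : is_derive x 1 g l ->
  forall e, 0 < e -> exists2 d, 0 < d &
    forall y, y != x -> `|y - x| < d -> `|(g y - g x)/(y - x) - l| < e.
Proof.
move=> [dg <-] e e0.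
move: dg => /cvgrPdist_lt /(_ e e0).
rewrite near_withinE => /nbhs_ballP[d /= d0 Hd]; exists d => // y yx yd.
have := Hd (y - x); rewrite /ball /= sub0r normrN => /(_ yd).
rewrite subr_eq0 => /(_ yx); rewrite distrC [(y - x)%:A]mulr1 subrK [_ *: _]mulrC.
by [].
Qed.

Lemma rdw_is_derive g x l : 0 < x -> rdw g x l -> is_derive x 1 g l.
Proof.
move=> x0 /rdwP H; apply: is_deriveP_eps => e e0.
have [d d0 Hd] := H e e0; exists (Order.min d x).
  by rewrite lt_min d0.
move=> y yx; rewrite lt_min => /andP[yd yx'].
apply: Hd => //.
move: yx'; rewrite ltr_norml => /andP[h1 _]; lra.
Qed.

Lemma rdw_cont g x l : 0 <= x -> rdw g x l ->
  forall e, 0 < e -> exists2 d, 0 < d &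
    forall y, 0 <= y -> `|y - x| < d -> `|g y - g x| < e.
Proof.
move=> x0 /rdwP H e e0.
have [d d0 Hd] := H 1 ltr01.
have L0 : 0 < `|l| + 1 by rewrite ltr_wpDl.
exists (Order.min d (e / (`|l| + 1))).
  by rewrite lt_min d0 divr_gt0.
move=> y y0; rewrite lt_min => /andP[yd ye].
have [->|yx] := eqVneq y x; first by rewrite subrr normr0.
have := Hd y y0 yx yd.
have yx0 : y - x != 0 by rewrite subr_eq0.
set q := (g y - g x) / (y - x) => Hq.
have -> : g y - g x = q * (y - x) by rewrite /q divfK.
rewrite normrM.
have Hq' : `|q| < `|l| + 1.
  have : `|q| <= `|q - l| + `|l| by rewrite -{1}(subrK l q) ler_normD.
  move=> /le_lt_trans; apply; rewrite addrC ltrD2l; exact: Hq.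
apply: (@le_lt_trans _ _ ((`|l| + 1) * `|y - x|)).
  by rewrite ler_wpM2r // ltW.
by rewrite -ltr_pdivlMl // mulrC.
Qed.

Lemma cont_itv_eps g a b : a < b ->
  (forall x, a <= x <= b -> forall e, 0 < e -> exists2 d, 0 < d &
    forall y, a <= y <= b -> `|y - x| < d -> `|g y - g x| < e) ->
  {within `[a, b], continuous g}.
Proof.
move=> ab H; apply/continuous_within_itvP => //; split.
- move=> x; rewrite in_itv /= => /andP[ax xb].
  apply/cvgrPdist_lt => e e0.
  have axb : a <= x <= b by rewrite (ltW ax) (ltW xb).
  have [d d0 Hd] := H x axb e e0.
  apply/nbhs_ballP; exists (Order.min d (Order.min (x - a) (b - x))).
    by rewrite /= !lt_min d0 !subr_gt0 ax xb.
  move=> t; rewrite /ball /= !lt_min => /andP[td /andP[t1 t2]].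
  rewrite distrC; apply: Hd; last by rewrite distrC.
  move: t1 t2; rewrite !ltr_norml => /andP[? ?] /andP[? ?].
  apply/andP; split; lra.
- apply/cvgrPdist_lt => e e0.
  have axb : a <= a <= b by rewrite lexx (ltW ab).
  have [d d0 Hd] := H a axb e e0.
  rewrite near_withinE; apply/nbhs_ballP; exists (Order.min d (b - a)).
    by rewrite /= !lt_min d0 !subr_gt0 ab.
  move=> t; rewrite /ball /= !lt_min => /andP[td t1] at0.
  rewrite distrC; apply: Hd; last by rewrite distrC.
  move: t1; rewrite !ltr_norml => /andP[? ?].
  apply/andP; split; lra.
- apply/cvgrPdist_lt => e e0.
  have axb : a <= b <= b by rewrite lexx (ltW ab).
  have [d d0 Hd] := H b axb e e0.
  rewrite near_withinE; apply/nbhs_ballP; exists (Order.min d (b - a)).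
    by rewrite /= !lt_min d0 !subr_gt0 ab.
  move=> t; rewrite /ball /= !lt_min => /andP[td t1] tb.
  rewrite distrC; apply: Hd; last by rewrite distrC.
  move: t1; rewrite !ltr_norml => /andP[? ?].
  apply/andP; split; lra.
Qed.

Lemma rdw_cont_itv g a b : 0 <= a -> a < b ->
  (forall x, 0 <= x -> exists l, rdw g x l) -> {within `[a, b], continuous g}.
Proof.
move=> a0 ab H; apply: cont_itv_eps => // x /andP[ax xb] e e0.
have x0 : 0 <= x by apply: le_trans ax.
have [l Hl] := H x x0.
have [d d0 Hd] := @rdw_cont g x l x0 Hl e e0.
exists d => // y /andP[ay _]; apply: Hd; exact: le_trans ay.
Qed.
End RA2.
Section RA3.
Context {R : realType}.

Lemma kappa_bound (h : R -> R) (Dh : nat -> R -> R) (kappa M : R) :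
  smooth0 h Dh -> 0 < M ->
  (forall s, 0 <= s <= M -> 0 < 1 + 2 * kappa * s * (Dh 1%N s) ^+ 2) ->
  exists2 c, 0 < c & forall s, 0 <= s <= M -> c <= 1 + 2 * kappa * s * (Dh 1%N s) ^+ 2.
Proof.
move=> [_ Hs] M0 Hp.
have cD : {within `[0, M], continuous (Dh 1%N)}.
  apply: rdw_cont_itv => // x x0; exists (Dh 2%N x); exact: Hs.
pose phi s := 1 + 2 * kappa * s * (Dh 1%N s * Dh 1%N s).
have cphi : {within `[0, M], continuous phi}.
  move=> x; apply: cvgD; first exact: cvg_cst.
  apply: cvgM; last by apply: cvgM; exact: cD.
  apply: cvgM; first exact: cvg_cst.
  have cid : {within `[0, M], continuous (fun s : R => s)}.
    by apply: continuous_subspaceT => y; exact: cvg_id.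
  exact: cid.
have [c0 c0in Hc0] := EVT_min (ltW M0) cphi.
exists (phi c0).
  by rewrite /phi -expr2; apply: Hp; move: c0in; rewrite in_itv.
move=> s sin; have := Hc0 s; rewrite in_itv /= sin => /(_ isT).
by rewrite /phi -!expr2.
Qed.
End RA3.
Section RA4.
Context {R : realType}.

Lemma is_derive_cont (g : R -> R) (x l : R) : is_derive x 1 g l -> {for x, continuous g}.
Proof.
move=> H; have dg : derivable g x 1 by case: H.
have := (derivable1_diffP g x).1 dg.
exact: differentiable_continuous.
Qed.

Lemma sq_is_derive (t0 k x : R) :
  is_derive x 1 (fun s => k * (s - t0) ^+ 2) (2 * k * (x - t0)).
Proof.
apply: is_deriveP_eps => e e0.
have [k0|k0] := eqVneq k 0.
  exists 1 => // y _ _; rewrite k0 !mul0r mulr0 subrr mul0r subr0.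
  by rewrite mul0r normr0.
exists (e / `|k|); first by rewrite divr_gt0 // normr_gt0.
move=> y yx yd.
have yx0 : y - x != 0 by rewrite subr_eq0.
have -> : (k * (y - t0) ^+ 2 - k * (x - t0) ^+ 2) / (y - x) - 2 * k * (x - t0)
   = k * (y - x).
  by apply: (mulIf yx0); rewrite mulrBl divfK //; ring.
by rewrite normrM -ltr_pdivlMl ?normr_gt0 // mulrC.
Qed.

Lemma F1_zero (F F1 : R -> R) t0 M : 0 < t0 -> t0 < M -> F t0 = 0 ->
  rdw F t0 (F1 t0) ->
  (forall s, 0 <= s <= M -> s != t0 -> 0 < F s) -> F1 t0 = 0.
Proof.
move=> t00 t0M Ft0 /rdwP H Fpos.
have [Hp|Hn|//] := ltgtP (F1 t0) 0.
- have [d d0 Hd] := H (- F1 t0 / 2) ltac:(rewrite divr_gt0 // oppr_gt0 //).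
  pose y := t0 + Order.min d (M - t0) / 2.
  have m0 : 0 < Order.min d (M - t0) by rewrite lt_min d0 subr_gt0.
  have my : Order.min d (M - t0) <= M - t0 by rewrite ge_min lexx orbT.
  have md : Order.min d (M - t0) <= d by rewrite ge_min lexx.
  have y0 : 0 <= y <= M by apply/andP; split; rewrite /y; lra.
  have yt : y != t0 by rewrite /y; apply/eqP; lra.
  have := Hd y (andP y0).1 yt.
  have yd : `|y - t0| < d by rewrite /y addrAC subrr add0r ger0_norm; lra.
  move=> /(_ yd); rewrite Ft0 subr0.
  have Fy := Fpos y y0 yt.
  have q0 : 0 < F y / (y - t0) by rewrite divr_gt0 // /y; lra.
  rewrite ltr_norml => /andP[_]; lra.
- have [d d0 Hd] := H (F1 t0 / 2) ltac:(rewrite divr_gt0 //).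
  pose y := t0 - Order.min d t0 / 2.
  have m0 : 0 < Order.min d t0 by rewrite lt_min d0 t00.
  have my : Order.min d t0 <= t0 by rewrite ge_min lexx orbT.
  have md : Order.min d t0 <= d by rewrite ge_min lexx.
  have y0 : 0 <= y <= M by apply/andP; split; rewrite /y; lra.
  have yt : y != t0 by rewrite /y; apply/eqP; lra.
  have yd : `|y - t0| < d by rewrite /y addrAC subrr add0r normrN ger0_norm; lra.
  have := Hd y (andP y0).1 yt yd; rewrite Ft0 subr0.
  have Fy := Fpos y y0 yt.
  have q0 : F y / (y - t0) < 0 by rewrite pmulr_rlt0 // invr_lt0 /y; lra.
  rewrite ltr_norml => /andP[+ _]; lra.
Qed.
End RA4.
Section RA5.
Context {R : realType}.

Lemma F_local (F F1 : R -> R) l t0 : 0 < t0 -> F t0 = 0 -> F1 t0 = 0 ->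
  (forall s, 0 <= s -> rdw F s (F1 s)) -> rdw F1 t0 l -> 0 < l ->
  exists2 del, 0 < del & forall s, `|s - t0| < del -> l / 4 * (s - t0) ^+ 2 <= F s.
Proof.
move=> t00 Ft0 F1t0 HF /rdwP HF1 l0.
have [d d0 Hd] := HF1 (l / 2) ltac:(by rewrite divr_gt0).
exists (Order.min d t0); first by rewrite lt_min d0 t00.
pose g := fun s : R => l / 4 * (s - t0) ^+ 2.
pose phi := (F - g : R -> R).
pose dphi := fun x => F1 x - 2 * (l / 4) * (x - t0).
have Dphi (x : R) : 0 < x -> is_derive x 1 phi (dphi x).
  move=> x0; apply: is_deriveB; first exact: (@rdw_is_derive R F x (F1 x) x0 (HF x (ltW x0))).
  exact: sq_is_derive.
have sgn (c : R) : c != t0 -> `|c - t0| < Order.min d t0 -> 0 < dphi c * (c - t0).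
  move=> ct; rewrite lt_min => /andP[cd ct0].
  have c0 : 0 <= c by move: ct0; rewrite ltr_norml => /andP[? _]; lra.
  have := Hd c c0 ct cd; rewrite F1t0 !subr0 => Hq.
  have ct' : c - t0 != 0 by rewrite subr_eq0.
  have q : 0 < F1 c / (c - t0) - l / 2.
    by move: Hq; rewrite ltr_norml => /andP[? _]; lra.
  have -> : dphi c * (c - t0) = (F1 c / (c - t0) - l / 2) * (c - t0) ^+ 2.
    rewrite /dphi; field; exact: ct'.
  by rewrite mulr_gt0 // lt_def sqrf_eq0 ct' sqr_ge0.
have cont (a b : R) : 0 < a -> {within `[a, b], continuous phi}.
  move=> a0; apply: continuous_in_subspaceT => x /set_mem /=; rewrite in_itv /= => /andP[ax _].
  exact: is_derive_cont (Dphi x (lt_le_trans a0 ax)).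
have phiE (z : R) : phi z = F z - g z by [].
have phit0 : phi t0 = 0 by rewrite phiE /g Ft0 subrr expr0n /= mulr0 subr0.
move=> s sd.
have : 0 <= phi s; last by rewrite phiE /g /=; lra.
have [st|st|->] := ltgtP s t0; last by rewrite phit0.
- have s0 : 0 < s by move: sd; rewrite lt_min !ltr_norml => /andP[/andP[? ?] /andP[? ?]]; lra.
  have [c cin Hc] : exists2 c, c \in `]s, t0[ & phi t0 - phi s = dphi c * (t0 - s).
    apply: MVT => //; last exact: cont.
    move=> x; rewrite in_itv /= => /andP[sx _]; apply: Dphi; exact: lt_trans sx.
  move: cin; rewrite in_itv /= => /andP[sc ct].
  have := sgn c ltac:(by rewrite lt_eqF) ltac:(by move: sd; rewrite !lt_min !ltr_norml => /andP[/andP[? ?] /andP[? ?]]; apply/andP; split; lra).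
  rewrite phit0 in Hc; nra.
- have [c cin Hc] : exists2 c, c \in `]t0, s[ & phi s - phi t0 = dphi c * (s - t0).
    apply: MVT => //; last exact: cont.
    move=> x; rewrite in_itv /= => /andP[sx _]; apply: Dphi; exact: lt_trans sx.
  move: cin; rewrite in_itv /= => /andP[sc ct].
  have := sgn c ltac:(by rewrite gt_eqF) ltac:(by move: sd; rewrite !lt_min !ltr_norml => /andP[/andP[? ?] /andP[? ?]]; apply/andP; split; lra).
  rewrite phit0 in Hc; nra.
Qed.
End RA5.
Section RA6.
Context {R : realType}.

Lemma F_bound (F F1 : R -> R) l t0 M : 0 < t0 -> t0 < M -> F t0 = 0 ->
  (forall s, 0 <= s -> rdw F s (F1 s)) -> rdw F1 t0 l -> 0 < l ->
  (forall s, 0 <= s <= M -> s != t0 -> 0 < F s) ->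
  exists2 c, 0 < c & forall s, 0 <= s <= M -> c * (s - t0) ^+ 2 <= F s.
Proof.
move=> t00 t0M Ft0 HF HF1 l0 Fpos.
have F1t0 : F1 t0 = 0 := @F1_zero R F F1 t0 M t00 t0M Ft0 (HF t0 (ltW t00)) Fpos.
have [del del0 Hloc] := @F_local R F F1 l t0 t00 Ft0 F1t0 HF HF1 l0.
pose k := fun s : R => Num.max 0 (del - `|s - t0|).
pose G := fun s => F s + k s.
have M0 : 0 < M by apply: lt_trans t0M.
have cF : {within `[0, M], continuous F}.
  apply: rdw_cont_itv => // x x0; exists (F1 x); exact: HF.
have ck : continuous k.
  have -> : k = (cst 0 \max (fun s => del - `|s - t0|)) by [].
  apply: max_fun_continuous; first by move=> x; exact: cvg_cst.
  move=> x; apply: cvgB; first exact: cvg_cst.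
  apply: cvg_norm; apply: cvgB; [exact: cvg_id | exact: cvg_cst].
have cG : {within `[0, M], continuous G}.
  move=> x; apply: cvgD; first exact: cF.
  exact: (continuous_subspaceT ck).
have [c0 c0in Hc0] := EVT_min (ltW M0) cG.
have g0 : 0 < G c0.
  move: c0in; rewrite in_itv /= => c0in.
  have [->|ct] := eqVneq c0 t0.
    by rewrite /G /k Ft0 subrr normr0 subr0 add0r lt_max del0 orbT.
  by rewrite /G ltr_pwDl ?Fpos // le_max lexx.
exists (Num.min (l / 4) (G c0 / M ^+ 2)).
  by rewrite lt_min divr_gt0 //= divr_gt0 // exprn_gt0.
move=> s sin.
have sq0 : 0 <= (s - t0) ^+ 2 by rewrite sqr_ge0.
have [sd|sd] := ltP `|s - t0| del.
  by apply: le_trans (Hloc s sd); apply: ler_wpM2r => //; rewrite ge_min lexx.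
have ks : k s = 0 by rewrite /k max_l // subr_le0.
have Gs : G c0 <= F s.
  by have := Hc0 s; rewrite in_itv /= sin /G ks addr0 => /(_ isT).
apply: (@le_trans _ _ (G c0 / M ^+ 2 * (s - t0) ^+ 2)).
  by apply: ler_wpM2r => //; rewrite ge_min lexx orbT.
have sM : (s - t0) ^+ 2 <= M ^+ 2.
  move: sin => /andP[? ?].
  have h1 : 0 <= M - s + t0 by lra.
  have h2 : 0 <= M + s - t0 by lra.
  have := mulr_ge0 h1 h2; nra.
apply: (le_trans _ Gs).
rewrite mulrAC ler_pdivrMr ?exprn_gt0 //; apply: ler_wpM2l => //; exact: ltW.
Qed.
End RA6.
Section MT.
Context {R : realType}.
Local Notation mu := (@lebesgue_measure R).

Lemma wderiv_meas (w dw : R -> R) : wderiv w dw -> measurable_fun setT dw.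
Proof.
move=> H.
rewrite -(bigcup_itvT true false); apply/measurable_fun_bigcup => // n.
have [n0|] := leP (1 *- n) (n%:R : R); last first.
  move=> lt; rewrite set_itv_ge //; last by rewrite bnd_simp -ltNge.
  exact: measurable_fun_set0.
have [/integrableP [mf _] _] := H _ _ n0.
exact/measurable_EFinP.
Qed.

Lemma wderiv_locint (w dw : R -> R) : wderiv w dw -> locally_integrable setT dw.
Proof.
move=> H; split; [exact: @wderiv_meas w dw H | exact: openT |].
move=> K _ cK.
have mK := compact_measurable cK.
have [N [_ N1x]] := compact_bounded cK.
have KN : K `<=` `[- (`|N| + 1), `|N| + 1].
  by move=> z Kz; rewrite set_itvcc /= -ler_norml N1x// ltr_pwDr// ler_norm.
have le : - (`|N| + 1) <= `|N| + 1 by have := normr_ge0 N; lra.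
have [iN _] := H _ _ le.
have iK : mu.-integrable K (EFin \o dw) by apply: integrableS iN.
by have /integrableP[_] := iK.
Qed.

Lemma wderiv_ae (w dw : R -> R) : wderiv w dw ->
  {ae mu, forall x : R, is_derive x 1 w (dw x)}.
Proof.
move=> H; have := lebesgue_differentiation (@wderiv_locint w dw H).
apply: filterS; first exact: (ae_filter_ringOfSetsType mu).
move=> x lx.
have xx : x - 1 <= x + 1 by lra.
have [ix _] := H _ _ xx.
have [dF F'] := @FTC1_lebesgue_pt R dw (BLeft (x - 1)) x (x + 1) ltac:(lra) ix
  ltac:(by rewrite lte_fin; lra) lx.
set F := (fun y => _) in dF F'.
have DF : is_derive x 1 F (dw x) by apply: DeriveDef => //; rewrite -derive1E.
apply: is_deriveP_eps => e e0.
have [d d0 Hd] := @is_derive_eps R F x (dw x) DF e e0.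
exists (Order.min d 1); first by rewrite lt_min d0 ltr01.
move=> y yx; rewrite lt_min => /andP[yd y1].
have E : w y - w x = F y - F x.
  have [_ Ey] := H (x - 1) y ltac:(move: y1; rewrite ltr_norml => /andP[? ?]; lra).
  have [_ Ex] := H (x - 1) x ltac:(lra).
  rewrite /F /= -Ey -Ex; lra.
by rewrite E; apply: Hd.
Qed.
End MT.
Section Chain.
Context {R : realType}.

Lemma chain_rdw (s h : R -> R) (x ds h1 : R) : (forall y, 0 <= s y) ->
  is_derive x 1 s ds -> rdw h (s x) h1 ->
  is_derive x 1 (fun y => h (s y)) (h1 * ds).
Proof.
move=> s0 Ds Dh; apply: is_deriveP_eps => e e0.
have A1 : 0 < `|h1| + 1 by rewrite ltr_pwDr // normr_ge0.
have A2 : 0 < `|ds| + 1 by rewrite ltr_pwDr // normr_ge0.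
pose e1 := Order.min 1 (e / (2 * (`|h1| + 1))).
have e10 : 0 < e1 by rewrite lt_min ltr01 divr_gt0 // mulr_gt0.
pose e2 := e / (2 * (`|ds| + 1)).
have e20 : 0 < e2 by rewrite divr_gt0 // mulr_gt0.
have [d1 d10 Hd1] := @is_derive_eps R s x ds Ds e1 e10.
have [d2 d20 Hd2] := @rdwP R h (s x) h1 Dh e2 e20.
exists (Order.min d1 (d2 / (`|ds| + 1))); first by rewrite lt_min d10 divr_gt0.
move=> y yx; rewrite lt_min => /andP[yd1 yd2].
have yx0 : y - x != 0 by rewrite subr_eq0.
have Hq := Hd1 y yx yd1.
set qs := (s y - s x) / (y - x) in Hq.
have e11 : e1 <= 1 by rewrite ge_min lexx.
have e1h : e1 * (`|h1| + 1) <= e / 2.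
  have : e1 <= e / (2 * (`|h1| + 1)) by rewrite ge_min lexx orbT.
  rewrite ler_pdivlMr ?mulr_gt0 // => H; rewrite ler_pdivlMr //; lra.
have qsb : `|qs| < `|ds| + 1.
  have : `|qs| <= `|qs - ds| + `|ds| by rewrite -{1}(subrK ds qs) ler_normD.
  lra.
have key : `|h1 * (qs - ds)| < e / 2.
  rewrite normrM; apply: (@le_lt_trans _ _ (`|h1| * e1)).
    by apply: ler_wpM2l => //; exact: ltW.
  have : 0 <= `|h1| by [].
  nra.
have [sxy|sxy] := eqVneq (s y) (s x).
  rewrite sxy subrr mul0r sub0r normrN.
  have qs0 : qs = 0 by rewrite /qs sxy subrr mul0r.
  move: key; rewrite qs0 sub0r mulrN normrN => key; lra.
have sd : `|s y - s x| < d2.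
  have -> : s y - s x = qs * (y - x) by rewrite /qs divfK.
  rewrite normrM.
  have : `|y - x| * (`|ds| + 1) < d2 by rewrite -ltr_pdivlMr.
  have : 0 <= `|y - x| by [].
  have : 0 <= `|qs| by [].
  nra.
have Hh := Hd2 (s y) (s0 y) sxy sd.
set qh := (h (s y) - h (s x)) / (s y - s x) in Hh.
have sxy0 : s y - s x != 0 by rewrite subr_eq0.
have -> : (h (s y) - h (s x)) / (y - x) = qh * qs.
  by rewrite /qh /qs; field; apply/andP; split.
have -> : qh * qs - h1 * ds = (qh - h1) * qs + h1 * (qs - ds) by ring.
apply: (le_lt_trans (ler_normD _ _)).
have : `|(qh - h1) * qs| < e / 2.
  rewrite normrM.
  have e2d : e2 * (`|ds| + 1) = e / 2 by rewrite /e2; field; lra.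
  apply: (@le_lt_trans _ _ (`|qh - h1| * (`|ds| + 1))).
    by apply: ler_wpM2l => //; exact: ltW.
  rewrite -e2d ltr_pM2r //.
lra.
Qed.
End Chain.
Section Misc.
Context {R : realType}.
Local Notation mu := (@lebesgue_measure R).

Lemma cabs2 (z : R[i]) : cabs z ^+ 2 = complex.Re z ^+ 2 + complex.Im z ^+ 2.
Proof.
by case: z => a b; rewrite /cabs /= sqr_sqrtr // addr_ge0 // sqr_ge0.
Qed.

Lemma cabs_ge0 (z : R[i]) : 0 <= cabs z.
Proof. by case: z => a b; rewrite /cabs /= sqrtr_ge0. Qed.

Lemma rdw_ext (g g' : R -> R) (x l : R) : (forall y, 0 <= y -> g y = g' y) ->
  0 <= x -> rdw g x l -> rdw g' x l.
Proof.
move=> E x0 H; rewrite /rdw; apply: cvg_trans H.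
apply: near_eq_cvg; rewrite near_withinE; near=> y => /= -[y0 _].
by rewrite (E y y0) (E x x0).
Unshelve. all: by end_near. Qed.

Lemma aeI (P Q : R -> Prop) : {ae mu, forall x, P x} -> {ae mu, forall x, Q x} ->
  {ae mu, forall x, P x /\ Q x}.
Proof.
move=> HP HQ; apply: (filterS2 (ae_filter_ringOfSetsType mu) _ HP HQ).
by move=> x; split.
Qed.

Lemma wderiv_cont (w dw : R -> R) : wderiv w dw -> continuous w.
Proof.
move=> H x.
have xx : x - 1 <= x + 1 by lra.
have [ix _] := H _ _ xx.
have := parameterized_integral_continuous xx ix.
move/continuous_within_itvP => /(_ ltac:(lra)) [ci _ _].
have cx := ci x ltac:(rewrite in_itv /=; apply/andP; split; lra).
have E : {near x, (fun y => w (x - 1) + parameterized_integral mu (x - 1) y dw) =1 w}.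
  apply/nbhs_ballP; exists 1 => //= y; rewrite /ball /= ltr_norml => /andP[_ y1].
  have [_ Hy] := H (x - 1) y ltac:(lra).
  by rewrite /parameterized_integral -Hy; ring.
have cf : (fun y => w (x - 1) + parameterized_integral mu (x - 1) y dw) @ x --> w x.
  rewrite -(nbhs_singleton E).
  by apply: cvgD; [exact: cvg_cst | exact: cx].
exact: cvg_trans (near_eq_cvg E) cf.
Qed.

End Misc.
Section Alg.
Context {R : realType}.

Lemma comp_cont (F s : R -> R) :
  (forall z, 0 <= z -> forall e, 0 < e -> exists2 d, 0 < d &
     forall y, 0 <= y -> `|y - z| < d -> `|F y - F z| < e) ->
  (forall y, 0 <= s y) -> continuous s -> continuous (fun y => F (s y)).
Proof.
move=> HF s0 cs x; apply/cvgrPdist_lt => e e0.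
have [d d0 Hd] := HF (s x) (s0 x) e e0.
have H := (cvgrPdist_lt _ _).1 (cs x) d d0.
near=> y; rewrite distrC; apply: Hd => //; rewrite distrC.
near: y; exact: H.
Unshelve. all: by end_near. Qed.

Lemma alg (A B a b FS H1 kappa M t0 cF cK : R) :
  A ^+ 2 + B ^+ 2 <= M -> 0 < cF -> 0 < cK ->
  cF * (A ^+ 2 + B ^+ 2 - t0) ^+ 2 <= FS ->
  cK <= 1 + 2 * kappa * (A ^+ 2 + B ^+ 2) * H1 ^+ 2 ->
  Num.min (Num.min 1 cK) cF * ((a ^+ 2 + b ^+ 2) + (A ^+ 2 + B ^+ 2 - t0) ^+ 2)
    <= (a ^+ 2 + b ^+ 2) + FS + kappa / 2 * (H1 * (2 * (A * a + B * b))) ^+ 2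
  /\ (2 * (A * a + B * b)) ^+ 2 <= 4 * M * (a ^+ 2 + b ^+ 2).
Proof.
set S := A ^+ 2 + B ^+ 2; set D2 := a ^+ 2 + b ^+ 2; set P := A * a + B * b.
move=> SM cF0 cK0 HF HK.
have D20 : 0 <= D2 by rewrite /D2 addr_ge0 // sqr_ge0.
have CS : P ^+ 2 <= S * D2.
  have : S * D2 = P ^+ 2 + (A * b - B * a) ^+ 2 by rewrite /S /D2 /P; ring.
  have := sqr_ge0 (A * b - B * a); lra.
set m1 := Num.min 1 cK.
set c := Num.min m1 cF.
have m10 : 0 < m1 by rewrite lt_min ltr01 cK0.
have cm1 : c <= m1 by rewrite ge_min lexx.
have ccF : c <= cF by rewrite ge_min lexx orbT.
have m11 : m1 <= 1 by rewrite ge_min lexx.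
have m1K : m1 <= cK by rewrite ge_min lexx orbT.
have q0 : 0 <= (S - t0) ^+ 2 by rewrite sqr_ge0.
split; last first.
  have S0 : 0 <= S by rewrite /S addr_ge0 // sqr_ge0.
  have : S * D2 <= M * D2 by apply: ler_wpM2r.
  rewrite exprMn; lra.
have T : m1 * D2 <= D2 + kappa / 2 * (H1 * (2 * P)) ^+ 2.
  have -> : kappa / 2 * (H1 * (2 * P)) ^+ 2 = 2 * kappa * H1 ^+ 2 * P ^+ 2.
    by rewrite exprMn exprMn; field.
  have H0 : 0 <= H1 ^+ 2 by rewrite sqr_ge0.
  have [k0|k0] := leP 0 kappa.
    have : 0 <= 2 * kappa * H1 ^+ 2 * P ^+ 2.
      apply: mulr_ge0; last exact: sqr_ge0.
      apply: mulr_ge0 => //; apply: mulr_ge0 => //.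
    have : m1 * D2 <= D2 by rewrite ler_piMl.
    lra.
  have : 2 * kappa * H1 ^+ 2 * (S * D2) <= 2 * kappa * H1 ^+ 2 * P ^+ 2.
    apply: ler_wnM2l; last exact: CS.
    have k2 : 2 * kappa <= 0 by lra.
    exact: mulr_le0_ge0 k2 H0.
  have : m1 * D2 <= cK * D2 by apply: ler_wpM2r.
  have : cK * D2 <= (1 + 2 * kappa * S * H1 ^+ 2) * D2 by apply: ler_wpM2r.
  have E : (1 + 2 * kappa * S * H1 ^+ 2) * D2 = D2 + 2 * kappa * H1 ^+ 2 * (S * D2) by ring.
  lra.
have : c * D2 <= m1 * D2 by apply: ler_wpM2r.
have : c * (S - t0) ^+ 2 <= cF * (S - t0) ^+ 2 by apply: ler_wpM2r.
lra.
Qed.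
End Alg.
Section DF.
Context {R : realType}.

Lemma is_derive_uniq (g : R -> R) (x a b : R) :
  is_derive x 1 g a -> is_derive x 1 g b -> a = b.
Proof. by move=> [_ <-] [_ <-]. Qed.
Arguments is_derive_uniq {g x a b}.

Lemma deriv_facts (u du : R -> R[i]) (h Dh1 : R -> R) (r0 x dwv dhv : R) :
  is_derive x 1 (fun y => complex.Re (u y)) (complex.Re (du x)) ->
  is_derive x 1 (fun y => complex.Im (u y)) (complex.Im (du x)) ->
  is_derive x 1 (fun y => cabs (u y) ^+ 2 - r0 ^+ 2) dwv ->
  is_derive x 1 (fun y => h (cabs (u y) ^+ 2)) dhv ->
  rdw h (cabs (u x) ^+ 2) (Dh1 (cabs (u x) ^+ 2)) ->
  dwv = 2 * (complex.Re (u x) * complex.Re (du x) + complex.Im (u x) * complex.Im (du x))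
  /\ dhv = Dh1 (cabs (u x) ^+ 2) * dwv.
Proof.
move=> dA dB dW dH dh.
set A := (fun y => complex.Re (u y)); set B := (fun y => complex.Im (u y)).
have E : (fun y => cabs (u y) ^+ 2 - r0 ^+ 2) = (A * A + B * B - cst (r0 ^+ 2)).
  by apply/funext => y; rewrite cabs2 !expr2.
have D1 := is_deriveB (is_deriveD (is_deriveM dA dA) (is_deriveM dB dB)) (is_derive_cst (r0 ^+ 2) x 1).
rewrite -E in D1.
have e1 := is_derive_uniq dW D1.
split.
  rewrite e1 /GRing.scale /=; ring.
have E2 : (fun y => cabs (u y) ^+ 2) = (fun y => cabs (u y) ^+ 2 - r0 ^+ 2) + cst (r0 ^+ 2).
  by apply/funext => y /=; rewrite subrK.
have D2 := is_deriveD dW (is_derive_cst (r0 ^+ 2) x 1).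
rewrite -E2 addr0 in D2.
have D3 := @chain_rdw R _ h x _ _ (fun y => sqr_ge0 (cabs (u y))) D2 dh.
exact: is_derive_uniq dH D3.
Qed.
End DF.
Arguments wderiv_cont {R w dw}.
Arguments wderiv_meas {R w dw}.
Arguments wderiv_ae {R w dw}.
Arguments comp_cont {R F s}.
Arguments deriv_facts {R u du h Dh1 r0 x dwv dhv}.
Arguments alg {R A B a b FS H1 kappa M t0 cF cK}.

Arguments aeI {R P Q}.
Section Alg2.
Context {R : realType}.

Lemma Re_i_conj (z w : R[i]) :
  complex.Re ('i%C * z * w^*%C) = complex.Re z * complex.Im w - complex.Im z * complex.Re w.
Proof. by case: z => a b; case: w => A B /=; ring. Qed.

Lemma alg2 (A B a b m t0 : R) : 0 < m -> m ^+ 2 <= A ^+ 2 + B ^+ 2 ->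
  `|(a * B - b * A) * (1 - t0 / (A ^+ 2 + B ^+ 2))|
     <= ((a ^+ 2 + b ^+ 2) + (A ^+ 2 + B ^+ 2 - t0) ^+ 2) / m.
Proof.
set S := A ^+ 2 + B ^+ 2; set D2 := a ^+ 2 + b ^+ 2; set P := a * B - b * A.
move=> m0 mS.
have S0 : 0 < S by apply: lt_le_trans mS; rewrite exprn_gt0.
have LG : P ^+ 2 <= S * D2.
  have : S * D2 = P ^+ 2 + (A * a + B * b) ^+ 2 by rewrite /S /D2 /P; ring.
  have := sqr_ge0 (A * a + B * b); lra.
have E : 1 - t0 / S = (S - t0) / S by field; rewrite gt_eqF.
rewrite E ler_pdivlMr //.
set q := S - t0.
pose Y := `|P| * m / S.
have Y0 : 0 <= Y.
  by rewrite /Y; apply: divr_ge0; [apply: mulr_ge0 => //; exact: ltW | exact: ltW].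
have YS : Y * S = `|P| * m by rewrite /Y divfK // gt_eqF.
have Y2 : Y ^+ 2 <= D2.
  have h1 : (Y * S) ^+ 2 <= (S ^+ 2) * D2.
    rewrite YS exprMn -normrX ger0_norm ?sqr_ge0 //.
    have : P ^+ 2 * m ^+ 2 <= P ^+ 2 * S by apply: ler_wpM2l; rewrite ?sqr_ge0.
    have : P ^+ 2 * S <= S * D2 * S by apply: ler_wpM2r => //; exact: ltW.
    have -> : S ^+ 2 * D2 = S * D2 * S by ring.
    by move=> h1 h2; exact: le_trans h2 h1.
  rewrite exprMn in h1.
  have S20 : 0 < S ^+ 2 by rewrite exprn_gt0.
  rewrite mulrC ler_pM2l // in h1.
have -> : `|P * (q / S)| * m = Y * `|q|.
  rewrite /Y !normrM normfV (gtr0_norm S0); field.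
  by rewrite gt_eqF.
have : Y * `|q| <= (Y ^+ 2 + `|q| ^+ 2) / 2.
  have := sqr_ge0 (Y - `|q|); lra.
have D20 : 0 <= D2 by rewrite /D2 addr_ge0 // sqr_ge0.
have nq : `|q| ^+ 2 = q ^+ 2 by rewrite -normrX ger0_norm // sqr_ge0.
rewrite nq; have := sqr_ge0 q; lra.
Qed.
End Alg2.
Theorem lemma3p1 (R : realType) (f h : R -> R) (Df Dh : nat -> R -> R)
  (r0 kappa xi : R) :
  0 < r0 ->
  (* (H1) *)
  smooth0 f Df -> smooth0 h Dh ->
  f (r0 ^+ 2) = 0 ->
  (* (H2) *)
  (forall s, 0 <= s <= r0 ^+ 2 -> 0 < 1 + 2 * kappa * s * (Dh 1%N s) ^+ 2) ->
  (* (H3) *)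
  (forall s, 0 <= s < r0 ^+ 2 -> 0 < Fpot f r0 s) ->
  (exists (F1 : R -> R) (l : R),
      (forall s, 0 <= s -> rdw (Fpot f r0) s (F1 s)) /\
      rdw F1 (r0 ^+ 2) l /\ 0 < l) ->
  (* kappa > kappa_tilde *)
  (ktilde (Dh 1%N) r0 < kappa%:E)%E ->
  (* choice of xi_tilde *)
  0 < xi ->
  (forall s, r0 ^+ 2 < s <= r0 ^+ 2 + xi ->
     0 < Fpot f r0 s /\ 0 < 1 + 2 * kappa * s * (Dh 1%N s) ^+ 2) ->
  exists C : R, 0 < C /\
    forall u du : R -> R[i],
      inX r0 u du ->
      (forall x, (cabs (u x)) ^+ 2 <= r0 ^+ 2 + xi) ->
      forall dhu : R -> R, wderiv (fun x => h ((cabs (u x)) ^+ 2)) dhu ->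
      forall dw : R -> R, wderiv (fun x => (cabs (u x)) ^+ 2 - r0 ^+ 2) dw ->
      ({ae @lebesgue_measure R, forall x,
          C^-1 * ((cabs (du x)) ^+ 2 + ((cabs (u x)) ^+ 2 - r0 ^+ 2) ^+ 2)
          <= (cabs (du x)) ^+ 2 + Fpot f r0 ((cabs (u x)) ^+ 2)
             + kappa / 2 * (dhu x) ^+ 2}
       /\
       (\int[@lebesgue_measure R]_(x in setT)
           ((((cabs (u x)) ^+ 2 - r0 ^+ 2) ^+ 2 + (dw x) ^+ 2)%:E)
         <= C%:E * Ekappa kappa f r0 u du dhu)%E
       /\
       (let m := inf (range (fun x => cabs (u x))) in
        0 < m ->
        (`| Pmom r0 u du | <= (C / m)%:E * Ekappa kappa f r0 u du dhu)%E)).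
Proof.
move=> r00 sf sh f0 H2 H3 [F1 [l [HF1 [HFl l0]]]] _ xi0 Hxi.
pose t0 := r0 ^+ 2; pose M := t0 + xi.
have t00 : 0 < t0 by rewrite exprn_gt0.
have t0M : t0 < M by rewrite /M ltrDl.
have M0 : 0 < M by apply: lt_trans t0M.
pose F := Fpot f r0.
have Ft0 : F t0 = 0 by rewrite /F /Fpot lexx set_itv1 Rintegral_set1.
have Fpos : forall s, 0 <= s <= M -> s != t0 -> 0 < F s.
  move=> s /andP[s0 sM] st; have [lt|gt] := ltP s t0.
    by apply: H3; rewrite s0 lt.
  by apply: (Hxi s _).1; rewrite sM andbT lt_neqAle eq_sym st gt.
have [cF cF0 HcF] := @F_bound R F F1 l t0 M t00 t0M Ft0 HF1 HFl l0 Fpos.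
have Hk : forall s, 0 <= s <= M -> 0 < 1 + 2 * kappa * s * (Dh 1%N s) ^+ 2.
  move=> s /andP[s0 sM]; have [le|gt] := leP s t0.
    by apply: H2; rewrite s0 le.
  by apply: (Hxi s _).2; rewrite sM andbT gt.
have [cK cK0 HcK] := @kappa_bound R h Dh kappa M sh M0 Hk.
pose c := Num.min (Num.min 1 cK) cF.
have c0 : 0 < c by rewrite /c !lt_min ltr01 cK0 cF0.
pose K := 1 + 4 * M.
have K1 : 1 <= K by rewrite /K lerDl; lra.
have K0 : 0 < K by lra.
exists (K / c); split; first by rewrite divr_gt0.
move=> u du [[wA wB] _] ub dhu whu dw wdw.
have hrdw : forall y, 0 <= y -> rdw h y (Dh 1%N y).
  case: sh => sh0 sh1 y y0.
  exact: (@rdw_ext R (Dh 0%N) h y (Dh 1%N y) sh0 y0 (sh1 0%N y y0)).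
have cA : continuous (fun x => complex.Re (u x)) := wderiv_cont wA.
have cB : continuous (fun x => complex.Im (u x)) := wderiv_cont wB.
have Sfun : (fun x => cabs (u x) ^+ 2) = (fun x => complex.Re (u x) * complex.Re (u x)
    + complex.Im (u x) * complex.Im (u x)).
  by apply/funext => x; rewrite cabs2 !expr2.
have cS : continuous (fun x => cabs (u x) ^+ 2).
  rewrite Sfun => x; apply: cvgD; apply: cvgM; [exact: cA|exact: cA|exact: cB|exact: cB].
have S0 : forall x, 0 <= cabs (u x) ^+ 2 by move=> x; exact: sqr_ge0.
have Fe : forall z, 0 <= z -> forall e, 0 < e -> exists2 d, 0 < d &
     forall y, 0 <= y -> `|y - z| < d -> `|F y - F z| < e.
  by move=> z z0; exact: (@rdw_cont R F z (F1 z) z0 (HF1 z z0)).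
have cFS : continuous (fun x => F (cabs (u x) ^+ 2)) := comp_cont Fe S0 cS.
have ma : measurable_fun setT (fun x => complex.Re (du x)) := wderiv_meas wA.
have mb : measurable_fun setT (fun x => complex.Im (du x)) := wderiv_meas wB.
have mdh : measurable_fun setT dhu := wderiv_meas whu.
have mdw : measurable_fun setT dw := wderiv_meas wdw.
have mD2 : measurable_fun setT (fun x => cabs (du x) ^+ 2).
  have -> : (fun x => cabs (du x) ^+ 2) = (fun x => complex.Re (du x) * complex.Re (du x)
    + complex.Im (du x) * complex.Im (du x)).
    by apply/funext => x; rewrite cabs2 !expr2.
  by apply: measurable_funD; apply: measurable_funM.
pose e := fun x => cabs (du x) ^+ 2 + F (cabs (u x) ^+ 2) + kappa / 2 * dhu x ^+ 2.
have me : measurable_fun setT e.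
  apply: measurable_funD; first apply: measurable_funD => //.
    exact: continuous_measurable_fun.
  apply: measurable_funM; first exact: measurable_cst.
  by rewrite /=; apply: measurable_funM.
have aeP : {ae @lebesgue_measure R, forall x,
    c * (cabs (du x) ^+ 2 + (cabs (u x) ^+ 2 - t0) ^+ 2) <= e x
    /\ dw x ^+ 2 <= 4 * M * cabs (du x) ^+ 2}.
  have := aeI (aeI (wderiv_ae wA) (wderiv_ae wB)) (aeI (wderiv_ae wdw) (wderiv_ae whu)).
  apply: filterS; first exact: (ae_filter_ringOfSetsType (@lebesgue_measure R)).
  move=> x [[dA dB] [dW dH]].
  have [e1 e2] := deriv_facts dA dB dW dH (hrdw _ (S0 x)).
  have SM : cabs (u x) ^+ 2 <= M := ub x.
  rewrite /e e2 e1 !cabs2.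
  rewrite cabs2 in SM.
  apply: (alg SM cF0 cK0).
    by apply: HcF; rewrite SM andbT addr_ge0 ?sqr_ge0.
  by apply: HcK; rewrite SM andbT addr_ge0 ?sqr_ge0.
have aeF := ae_filter_ringOfSetsType (@lebesgue_measure R).
have X0 : forall x, 0 <= cabs (du x) ^+ 2 + (cabs (u x) ^+ 2 - t0) ^+ 2.
  by move=> x; rewrite addr_ge0 // sqr_ge0.
pose ep := fun x => Num.max (e x) 0.
have ep0 : forall x, 0 <= ep x by move=> x; rewrite /ep le_max lexx orbT.
have mep : measurable_fun setT ep.
  by apply: measurable_maxr => //; exact: measurable_cst.
have Eint : Ekappa kappa f r0 u du dhu = (\int[@lebesgue_measure R]_(x in setT) (ep x)%:E)%E.
  rewrite /Ekappa; apply: ae_eq_integral => //.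
  - by apply/measurable_EFinP; exact: me.
  - by apply/measurable_EFinP; exact: mep.
  apply: filterS aeP => x [H _] _; rewrite /ep max_l //.
  apply: le_trans H; exact: mulr_ge0 (ltW c0) (X0 x).
have aeE : {ae @lebesgue_measure R, forall x,
    c * (cabs (du x) ^+ 2 + (cabs (u x) ^+ 2 - t0) ^+ 2) <= ep x
    /\ dw x ^+ 2 <= 4 * M * cabs (du x) ^+ 2}.
  apply: filterS aeP => x [G1 G2]; split => //.
  by apply: le_trans G1 _; rewrite /ep le_max lexx.
have intZ : forall k, 0 <= k -> (\int[@lebesgue_measure R]_(x in setT) (k * ep x)%:E
    = k%:E * \int[@lebesgue_measure R]_(x in setT) (ep x)%:E)%E.
  move=> k k0; under eq_integral do rewrite EFinM.
  apply: ge0_integralZl_EFin => //.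
    by move=> x _; rewrite lee_fin.
  by apply/measurable_EFinP.
have mK : forall k, measurable_fun setT (fun x => (k * ep x)%:E).
  move=> k; apply/measurable_EFinP.
  by apply: measurable_funM; [exact: measurable_cst | exact: mep].
have Kc0 : 0 < K / c by rewrite divr_gt0.
split.
  apply: filterS aeP => x [H _].
  rewrite invf_div; apply: le_trans H.
  apply: ler_wpM2r; first exact: X0.
  by rewrite ler_pdivrMr // ler_peMr // ltW.
have KX : forall x, K * (cabs (du x) ^+ 2 + (cabs (u x) ^+ 2 - t0) ^+ 2)
    <= K / c * ep x ->
  c * (cabs (du x) ^+ 2 + (cabs (u x) ^+ 2 - t0) ^+ 2) <= ep x -> True.
  by [].
have KcX : forall x, c * (cabs (du x) ^+ 2 + (cabs (u x) ^+ 2 - t0) ^+ 2) <= ep x ->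
    K * (cabs (du x) ^+ 2 + (cabs (u x) ^+ 2 - t0) ^+ 2) <= K / c * ep x.
  move=> x G1.
  have -> : K * (cabs (du x) ^+ 2 + (cabs (u x) ^+ 2 - t0) ^+ 2)
    = K / c * (c * (cabs (du x) ^+ 2 + (cabs (u x) ^+ 2 - t0) ^+ 2)).
    by field; rewrite gt_eqF.
  by apply: ler_wpM2l => //; exact: ltW.
split.
  rewrite Eint -(intZ _ (ltW Kc0)).
  apply: ae_ge0_le_integral => //.
  - by move=> x _; rewrite lee_fin addr_ge0 // sqr_ge0.
  - apply/measurable_EFinP; apply: measurable_funD.
      apply: measurable_funX; apply: measurable_funB.
        exact: continuous_measurable_fun cS.
      exact: measurable_cst.
    exact: measurable_funX mdw.
  - by move=> x _; rewrite lee_fin mulr_ge0 // ltW.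
  - exact: mK.
  apply: filterS aeE => x [G1 G2] _.
  rewrite lee_fin; apply: le_trans (KcX x G1).
  have D0 : 0 <= cabs (du x) ^+ 2 by rewrite sqr_ge0.
  have q0 : 0 <= (cabs (u x) ^+ 2 - t0) ^+ 2 by rewrite sqr_ge0.
  have : 0 <= 4 * M * (cabs (u x) ^+ 2 - t0) ^+ 2 by rewrite mulr_ge0 // mulr_ge0 // ltW.
  rewrite /K /t0; lra.
move=> m m0.
have um : forall x, m <= cabs (u x).
  move=> x; apply: ge_inf; last by exists x.
  by exists 0 => _ [y _ <-]; exact: cabs_ge0.
have Sm : forall x, m ^+ 2 <= cabs (u x) ^+ 2.
  by move=> x; have := um x; have := cabs_ge0 (u x); nra.
have Spos : forall x, cabs (u x) ^+ 2 != 0.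
  move=> x; rewrite gt_eqF //; apply: lt_le_trans (Sm x); exact: exprn_gt0.
pose g := fun x => complex.Re ('i%C * du x * (u x)^*%C) * (1 - r0 ^+ 2 / cabs (u x) ^+ 2).
have gE : g = fun x => (complex.Re (du x) * complex.Im (u x) - complex.Im (du x) * complex.Re (u x))
    * (1 - r0 ^+ 2 / cabs (u x) ^+ 2).
  by apply/funext => x; rewrite /g Re_i_conj.
have mg : measurable_fun setT g.
  rewrite gE; apply: measurable_funM.
    apply: measurable_funB; apply: measurable_funM => //.
      exact: continuous_measurable_fun cB.
    exact: continuous_measurable_fun cA.
  apply: continuous_measurable_fun => x.
  apply: cvgB; first exact: cvg_cst.
  apply: cvgM; first exact: cvg_cst.
  apply: cvgV; [exact: Spos | exact: cS].
have kk : 0 <= K / c / m by rewrite divr_ge0 // ltW.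
rewrite /Pmom Eint -(intZ _ kk).
apply: le_trans (le_abse_integral _ _ _) _ => //.
  by apply/measurable_EFinP; exact: mg.
under eq_integral do rewrite abse_EFin.
apply: ae_ge0_le_integral => //.
- apply/measurable_EFinP.
  exact: measurableT_comp (@normr_measurable _ _) mg.
- by move=> x _; rewrite lee_fin mulr_ge0.
- exact: mK.
apply: filterS aeE => x [G1 _] _.
rewrite lee_fin.
have Smx := Sm x; rewrite cabs2 in Smx.
have Hg := @alg2 R _ _ (complex.Re (du x)) (complex.Im (du x)) m t0 m0 Smx.
rewrite -!cabs2 in Hg.
rewrite Re_i_conj; apply: le_trans Hg _.
have h1 := KcX x G1.
have h2 : cabs (du x) ^+ 2 + (cabs (u x) ^+ 2 - t0) ^+ 2
    <= K * (cabs (du x) ^+ 2 + (cabs (u x) ^+ 2 - t0) ^+ 2).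
  by rewrite ler_peMl // X0.
rewrite [K / c / m * ep x]mulrAC; apply: ler_wpM2r; first by rewrite invr_ge0 ltW.
exact: le_trans h2 h1.
Qed.
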